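(* Let $p$ be a prime, $n\ge 2$ and $1\le m\le n-1$ integers. For any real $\alpha$ with $\min\{m,n-m\}<\alpha\le m(n-m)$, there exists a subset $G\subset G(n,n-m)$ with $|G|\approx p^{\alpha}$ such that the following holds for every $E\subset\mathbb{F}_p^n$, writing $|E|=p^{s}$: (1) if $|E|\le p^m$ and $t\in(0,s]$, then $|\{W\in G:\ |\pi^W(E)|\le p^t\}|\lesssim |G|\,p^{t-s}$; (2) if $|E|>p^m$, then for every small $\varepsilon>0$, $|\{W\in G:\ |\pi^W(E)|\le \varepsilon p^m\}|\lesssim |G|\,\varepsilon$.
   Context: $\mathbb{F}_p$ is the field with $p$ elements. $G(n,k)$ denotes the set of all $k$-dimensional linear subspaces of $\mathbb{F}_p^n$. For a nontrivial subspace $W$ and $E\subset\mathbb{F}_p^n$, $\pi^{W}(E)=\{x+W:\ E\cap(x+W)\neq\emptyset,\ x\in\mathbb{F}_p^n\}$ is the set of cosets of $W$ meeting $E$. $|J|$ denotes cardinality. $f\lesssim g$ means $f\le Cg$ for a constant $C$ independent of $p$, $E$, $t$, $\varepsilon$ (depending only on $n,m,\alpha$); $f\approx g$ means $f\lesssim g$ and $g\lesssim f$. *)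

(* Defs.v *)
From mathcomp Require Import all_boot all_order all_algebra.
From Stdlib Require Import Reals.
Set Implicit Arguments. Unset Strict Implicit. Unset Printing Implicit Defensive.
Import GRing.Theory.

Notation Fpn p n := 'rV['F_p]_n.

Definition coset_of (p n : nat) (W : {vspace Fpn p n}) (x : Fpn p n)
  : {set Fpn p n} := [set y : Fpn p n | (GRing.add y (GRing.opp x)) \in W].

(* pi^W(E) : the set of cosets of W meeting E. *)
Definition proj_cosets (p n : nat) (W : {vspace Fpn p n}) (E : {set Fpn p n})
  : {set {set Fpn p n}} := [set coset_of W x | x in E].

Definition Rleb (x y : R) : bool := if Rle_dec x y then true else false.

(* Main.v *)
Require Import Defs.
From mathcomp Require Import all_boot all_order all_algebra.
From Stdlib Require Import Reals.
From mathcomp Require Import zify.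
From Stdlib Require Import Lra Lia.

Lemma amgm2 a b : 2 * (a * b) <= a * a + b * b.
Proof.
wlog h : a b / a <= b.
  move=> H; case: (leqP a b) => h; first exact: H.
  by rewrite [a * b]mulnC addnC; apply: H; apply: ltnW.
move/subnKC: h => <-; set d := b - a.
nia.
Qed.

Lemma cs_nat (I : finType) (P : {pred I}) (c : I -> nat) :
  (\sum_(i in P) c i) * (\sum_(i in P) c i) <= #|P| * \sum_(i in P) c i * c i.
Proof.
have E1 : (\sum_(i in P) c i) * (\sum_(i in P) c i) = \sum_(i in P) \sum_(j in P) c i * c j.
  by rewrite big_distrl /=; apply: eq_bigr => i _; rewrite big_distrr.
have E2 : #|P| * \sum_(i in P) c i * c i = \sum_(i in P) \sum_(j in P) c j * c j.
  by rewrite sum_nat_const.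
have E3 : #|P| * \sum_(i in P) c i * c i = \sum_(i in P) \sum_(j in P) c i * c i.
  by rewrite E2 exchange_big.
rewrite -(leq_pmul2l (isT : 0 < 2)).
have -> : 2 * (#|P| * \sum_(i in P) c i * c i) =
  \sum_(i in P) \sum_(j in P) c j * c j + \sum_(i in P) \sum_(j in P) c i * c i.
  by rewrite -E2 -E3 mul2n addnn.
rewrite E1 big_distrr /= -big_split /=; apply: leq_sum => i _.
rewrite big_distrr -big_split /=; apply: leq_sum => j _.
by rewrite addnC amgm2.
Qed.

Lemma cs_fibers (T U : finType) (f : T -> U) (A : {set T}) :
  #|A| * #|A| <= #|f @: A| * (\sum_(x in A) \sum_(y in A) (f x == f y)).
Proof.
pose c u := \sum_(x in A | f x == u) 1.
have H1 : #|A| = \sum_(u in f @: A) c u.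
  by rewrite -sum1_card (partition_big_imset f).
have H2 : \sum_(x in A) \sum_(y in A) (f x == f y) = \sum_(u in f @: A) c u * c u.
  rewrite (partition_big_imset f) /=; apply: eq_bigr => u _.
  rewrite big_distrl /=; apply: eq_bigr => x /andP[_ /eqP fx].
  rewrite mul1n /c big_mkcondr /=; apply: eq_bigr => y _.
  by rewrite fx eq_sym; case: (_ == _).
by rewrite H1 H2; apply: cs_nat.
Qed.
Import GRing.Theory.
Set Implicit Arguments. Unset Strict Implicit. Unset Printing Implicit Defensive.

Section Dot.
Local Open Scope ring_scope.
Variable F : finFieldType.

Definition dot d (u v : 'rV[F]_d) : F := (u *m v^T) 0 0.

Lemma dotDl d (a b z : 'rV[F]_d) : dot (a + b) z = dot a z + dot b z.
Proof. by rewrite /dot mulmxDl mxE. Qed.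

Lemma dotZl d c (a z : 'rV[F]_d) : dot (c *: a) z = c * dot a z.
Proof. by rewrite /dot -scalemxAl mxE. Qed.

Lemma dot_e d j (z : 'rV[F]_d) : dot (delta_mx 0 j) z = z 0 j.
Proof. by rewrite /dot -rowE !mxE. Qed.

Lemma dot0r d (a : 'rV[F]_d) : dot a 0 = 0.
Proof. by rewrite /dot trmx0 mulmx0 mxE. Qed.

Lemma count_ker_dot d (z : 'rV[F]_d) : z != 0 ->
  muln #|F| #|[set u : 'rV[F]_d | dot u z == 0]| = expn #|F| d.
Proof.
move=> nz.
have [j zj] : exists j, z 0 j != 0.
  apply/existsP; apply: contraR nz => /existsPn H.
  by apply/eqP/rowP => j; rewrite mxE; apply/eqP/negPn/H.
pose u := (z 0 j)^-1 *: (delta_mx 0 j : 'rV[F]_d).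
have du : dot u z = 1 by rewrite dotZl dot_e mulVf.
have fib : forall c, #|[set v : 'rV[F]_d | dot v z == c]| = #|[set v : 'rV[F]_d | dot v z == 0]|.
  move=> c; rewrite -!sum1_card (reindex_inj (addIr (c *: u))) /=.
  apply: eq_bigl => v; rewrite !inE dotDl dotZl du mulr1.
  by rewrite -subr_eq0 addrK.
have -> : (expn #|F| d)%nat = #|'rV[F]_d|.
  by rewrite card_mx mul1n.
rewrite -[#|'rV[F]_d|]sum1_card (partition_big (fun v => dot v z) predT) //=.
pose z0 : F := 0.
transitivity (\sum_(c : F) #|[set v : 'rV[F]_d | dot v z == z0]|)%nat.
  by rewrite sum_nat_const.
apply: eq_bigr => c _.
by rewrite -(fib c) -sum1_card; apply: eq_bigl => v; rewrite inE.
Qed.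

End Dot.
Lemma cnt_enum (T : finType) (P : pred T) : count P (enum T) = #|P|.
Proof. by rewrite cardE -size_filter /enum_mem -enumT filter_predT. Qed.

Lemma foldr_mul_le (T : Type) (g : T -> nat) K (s : seq T) :
  (forall x, g x <= K) -> foldr muln 1 [seq g x | x <- s] <= expn K (size s).
Proof.
move=> H; elim: s => [|x s IH] //=.
by rewrite expnS leq_mul.
Qed.

Section Construct.
Local Open Scope ring_scope.
Variable F : finFieldType.

Definition Pval a (x : 'rV[F]_a.+1) (s : F) : F := \sum_(i < a.+1) x 0 i * s ^+ i.+1.

Lemma roots_le a (x : 'rV[F]_a.+1) (c : F) : x != 0 ->
  (#|[set s : F | Pval x s == c]| <= a.+1)%nat.
Proof.
move=> nz.
have [j xj] : exists j, x 0 j != 0.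
  apply/existsP; apply: contraR nz => /existsPn H.
  by apply/eqP/rowP => j; rewrite mxE; apply/eqP/negPn/H.
pose Q := \poly_(k < a.+2) (if k is k'.+1 then x 0 (inord k') else - c).
have Qnz : Q != 0.
  apply/eqP => Q0; move: (congr1 (fun q : {poly F} => q`_(j.+1)) Q0).
  rewrite coef_poly coef0 ltnS ltn_ord inord_val => xj0.
  by rewrite xj0 eqxx in xj.
have sQ : (size Q <= a.+2)%nat by apply: size_poly.
have HQ : forall s, Q.[s] = Pval x s - c.
  move=> s; rewrite horner_poly big_ord_recl /= expr0 mulr1 addrC.
  by congr (_ + _); apply: eq_bigr => i _; rewrite inord_val.
have := max_poly_roots Qnz (rs := enum [set s : F | Pval x s == c]).
rewrite enum_uniq -cardE => H.
have: (#|[set s : F | Pval x s == c]| < size Q)%nat.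
  apply: H => //; apply/allP => s; rewrite mem_enum inE => /eqP hs.
  by rewrite /root HQ hs subrr.
move=> h; rewrite -ltnS; exact: leq_trans h sQ.
Qed.

Definition Dmat a b (t : 'rV[F]_b) (U : 'M[F]_(a, b)) : 'M[F]_(a.+1, b) :=
  \matrix_(i, j) (t 0 j ^+ i.+1 + (if unlift ord0 i is Some i' then U i' j else 0)).

Lemma Dmat_inj a b t U t' U' : @Dmat a b t U = Dmat t' U' -> t = t' /\ U = U'.
Proof.
move/matrixP => H.
have tt : t = t'.
  apply/rowP => j; move: (H ord0 j); rewrite !mxE unlift_none !addr0 /=.
  by rewrite !expr1.
split => //; subst t'; apply/matrixP => i j.
move: (H (lift ord0 i) j); rewrite !mxE liftK.
by move/addrI.
Qed.

Lemma Dmat_mul a b (x : 'rV[F]_a.+1) t (U : 'M[F]_(a, b)) j :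
  (x *m Dmat t U) 0 j = Pval x (t 0 j) + (x *m Dmat 0 U) 0 j.
Proof.
rewrite !mxE /Pval -big_split /=; apply: eq_bigr => i _.
rewrite !mxE mulrDr; congr (_ + _).
by rewrite expr0n /= add0r.
Qed.

Lemma count_t a b (x : 'rV[F]_a.+1) (y : 'rV[F]_b) (U : 'M[F]_(a, b)) : x != 0 ->
  (#|[pred t : 'rV[F]_b | x *m Dmat t U == y]| <= expn a.+1 b)%nat.
Proof.
move=> nz.
pose R j := [set s : F | Pval x s == y 0 j - (x *m Dmat 0 U) 0 j].
pose m (t : 'rV[F]_b) := [ffun j => t 0 j].
have minj : injective m.
  move=> t t' /ffunP H; apply/rowP => j; move: (H j); by rewrite !ffunE.
rewrite -(card_imset _ minj).
apply: leq_trans (_ : (#|finfun.family R| <= _)%nat).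
  apply: subset_leq_card; apply/subsetP => f /imsetP [t].
  rewrite inE => /eqP ht ->; apply/familyP => j.
  by rewrite ffunE inE -ht (Dmat_mul x t U j) addrK.
rewrite card_family.
have := @foldr_mul_le _ (fun j => #|R j|) a.+1 (enum 'I_b).
rewrite size_enum_ord; apply => j; exact: roots_le.
Qed.

Lemma construct a b N : (0 < N)%nat -> (N <= expn #|F| (a * b))%nat ->
  exists D : seq 'M[F]_(a.+1, b), [/\ uniq D, size D = (expn #|F| b * N)%nat &
   forall (x : 'rV[F]_a.+1) (y : 'rV[F]_b), x != 0 ->
     (count (fun M => x *m M == y) D <= expn a.+1 b * N)%nat].
Proof.
move=> N0 NB.
pose Us := take N (enum 'M[F]_(a, b)).
have sUs : size Us = N.
  by rewrite size_takel // -cardE card_mx.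
exists [seq Dmat t U | U <- Us, t <- enum 'rV[F]_b]; split.
- apply: allpairs_uniq.
  + by apply: take_uniq; apply: enum_uniq.
  + exact: enum_uniq.
  + move=> [U t] [U' t'] _ _ /= /Dmat_inj [-> ->] //.
- by rewrite size_allpairs sUs -cardE card_mx mul1n mulnC.
- move=> x y nz; rewrite -sUs; clear sUs; elim: Us => [|U s IH] //=.
  rewrite count_cat mulnS leq_add //.
  rewrite count_map; rewrite cnt_enum; exact: count_t.
Qed.

End Construct.

Lemma sum_count (T : Type) (s : seq T) (P : pred T) :
  (\sum_(A <- s) (P A : nat) = count P s)%nat.
Proof. by elim: s => [|x s IH]; rewrite ?big_nil ?big_cons //= IH. Qed.

Section Geo.
Local Open Scope ring_scope.
Variable F : finFieldType.
Variables k m : nat.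

Definition MA (A : 'M[F]_(k, m)) : 'M[F]_(k + m, m) := col_mx (- A) (1%:M : 'M[F]_m).

Definition Nphi (A : 'M[F]_(k, m)) (E : {set 'rV[F]_(k + m)}) : nat :=
  (\sum_(x in E) \sum_(y in E) (x *m MA A == y *m MA A))%nat.

Lemma mul_MA (A : 'M[F]_(k, m)) (v : 'rV[F]_(k + m)) : v *m MA A = rsubmx v - lsubmx v *m A.
Proof.
by rewrite -{1}(hsubmxK v) /MA mul_row_col mulmx1 mulmxN addrC.
Qed.

Lemma direct_bound (C : seq 'M[F]_(k, m)) K (E : {set 'rV[F]_(k + m)}) :
  (forall (x : 'rV[F]_k) (y : 'rV[F]_m), x != 0 -> (count (fun A => x *m A == y) C <= K)%nat) ->
  (\sum_(A <- C) Nphi A E <= #|E| * size C + #|E| * #|E| * K)%nat.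
Proof.
move=> HK.
rewrite /Nphi exchange_big /=.
have H1 : forall x y : 'rV[F]_(k + m), (\sum_(A <- C) (x *m MA A == y *m MA A) <= (x == y) * size C + K)%nat.
  move=> x y; rewrite (sum_count C (fun A => x *m MA A == y *m MA A)).
  case: (eqVneq x y) => [->|nxy].
    by rewrite mul1n (eq_count (a2 := predT)) ?count_predT ?leq_addr // => A; rewrite /= eqxx.
  rewrite mul0n add0n.
  set d := x - y.
  have dnz : d != 0 by rewrite subr_eq0.
  have -> : count (fun A => x *m MA A == y *m MA A) C = count (fun A => lsubmx d *m A == rsubmx d) C.
    apply: eq_count => A /=.
    by rewrite -subr_eq0 -mulmxBl mul_MA subr_eq0 eq_sym.
  case: (eqVneq (lsubmx d) 0) => [l0|lnz]; last exact: HK.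
  rewrite (eq_count (a2 := pred0)) ?count_pred0 // => A /=.
  rewrite l0 mul0mx; apply/negbTE; apply: contra dnz => /eqP r0.
  by rewrite -(hsubmxK d) l0 -r0 row_mx0.
have H2 : forall x, x \in E -> (\sum_(y in E) \sum_(A <- C) (x *m MA A == y *m MA A) <= size C + #|E| * K)%nat.
  move=> x xE; rewrite (bigD1 x) //=.
  apply: leq_add.
    rewrite (sum_count C (fun A => x *m MA A == x *m MA A)).
    by rewrite (eq_count (a2 := predT)) ?count_predT // => A; rewrite /= eqxx.
  rewrite -sum_nat_const; apply: leq_trans (_ : \sum_(y in E | y != x) K <= _)%nat.
    by apply: leq_sum => y /andP[_ /negbTE nyx]; apply: leq_trans (H1 x y) _; rewrite eq_sym nyx mul0n.
  by rewrite big_mkcondr /=; apply: leq_sum => y _; case: (_ != _).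
rewrite -mulnA -mulnDr -sum_nat_const; apply: leq_sum => x xE.
by rewrite exchange_big; apply: H2.
Qed.

End Geo.

Notation zr := (GRing.zero).

Lemma sum_bool_card (T : finType) (P : pred T) : (\sum_(x : T) (P x : nat) = #|P|)%nat.
Proof. by rewrite -sum1_card [RHS]big_mkcond /=; apply: eq_bigr => x _; rewrite unfold_in; case: (P x). Qed.

Section Dual.
Local Open Scope ring_scope.
Variable F : finFieldType.

Lemma dotBr d (u a b : 'rV[F]_d) : dot u (a - b) = dot u a - dot u b.
Proof. by rewrite /dot raddfB /= mulmxBr !mxE. Qed.

Lemma dot0l d (v : 'rV[F]_d) : dot 0 v = 0.
Proof. by rewrite /dot mul0mx mxE. Qed.

Lemma dot_mulmx d r (eta : 'rV[F]_r) (x : 'rV[F]_d) (B : 'M[F]_(d, r)) :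
  dot eta (x *m B) = dot (eta *m B^T) x.
Proof. by rewrite /dot trmx_mul mulmxA. Qed.

Lemma qZ n (z : 'rV[F]_n) :
  muln #|F| #|[set u : 'rV[F]_n | dot u z == 0]| =
   addn (expn #|F| n) (muln (z == 0) (muln (expn #|F| n) (subn #|F| 1))).
Proof.
case: (eqVneq z 0) => [->|nz]; last by rewrite count_ker_dot // mul0n addn0.
have -> : [set u : 'rV[F]_n | dot u 0 == 0] = setT.
  by apply/setP => u; rewrite !inE dot0r eqxx.
rewrite cardsT card_mx mul1n mul1n.
have q0 : (0 < #|F|)%nat by apply/card_gt0P; exists 0.
rewrite mulnBr muln1 mulnC subnKC //.
by rewrite leq_pmulr.
Qed.

Lemma L2 d r (B : 'M[F]_(d, r)) (E : {set 'rV[F]_d}) :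
  muln #|F| (\sum_(eta : 'rV[F]_r) \sum_(x in E) \sum_(y in E) (dot eta (x *m B) == dot eta (y *m B)))%nat =
   addn (#|E| * #|E| * expn #|F| r)%nat (expn #|F| r * (#|F| - 1) *
     \sum_(x in E) \sum_(y in E) (x *m B == y *m B))%nat.
Proof.
have E1 : forall x y : 'rV[F]_d,
    (\sum_(eta : 'rV[F]_r) (dot eta (x *m B) == dot eta (y *m B)))%nat =
          #|[set u : 'rV[F]_r | dot u (x *m B - y *m B) == 0]|.
  move=> x y; rewrite -sum1_card [RHS]big_mkcond /=; apply: eq_bigr => u _.
  by rewrite inE dotBr subr_eq0; case: (_ == _).
rewrite exchange_big /=.
rewrite (eq_bigr (fun x => \sum_(y in E) #|[set u : 'rV[F]_r | dot u (x *m B - y *m B) == zr]|)%nat); last first.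
  by move=> x _; rewrite exchange_big /=; apply: eq_bigr => y _; apply: E1.
rewrite big_distrr /= -mulnA -sum_nat_const [X in (_ + X)%nat]big_distrr /= -big_split /=.
apply: eq_bigr => x xE.
rewrite big_distrr /= big_distrr /= -sum_nat_const -big_split /=.
apply: eq_bigr => y yE.
by rewrite qZ subr_eq0 [(expn _ _ * _ * _)%nat]mulnC.
Qed.

End Dual.

Lemma sum_delta (T : finType) (a : T) (g : T -> nat) :
  (\sum_(x : T) ((a == x) * g x) = g a)%nat.
Proof.
rewrite (bigD1 a) //= eqxx mul1n big1 ?addn0 // => x /negbTE.
by rewrite eq_sym => ->.
Qed.

Lemma sum_const_seq (T : Type) (s : seq T) c : (\sum_(A <- s) c = size s * c)%nat.
Proof. by elim: s => [|x s IH]; rewrite ?big_nil ?big_cons //= IH mulSn. Qed.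

Lemma sum_diag (T : finType) (E : {set T}) :
  (\sum_(x in E) \sum_(y in E) (x == y) = #|E|)%nat.
Proof.
rewrite -sum1_card; apply: eq_bigr => x xE.
rewrite (bigD1 x) //= eqxx big1 // => y /andP[_ /negbTE].
by rewrite eq_sym => ->.
Qed.

Section Dual2.
Local Open Scope ring_scope.
Variable F : finFieldType.
Variables k m : nat.

Lemma MA_tr (A : 'M[F]_(k, m)) (eta : 'rV[F]_m) (psi : 'rV[F]_(k + m)) :
  (eta *m (MA A)^T == psi) = (eta == rsubmx psi) && (- (eta *m A^T) == lsubmx psi).
Proof.
rewrite /MA tr_col_mx trmx1 linearN /= mul_mx_row mulmx1 mulmxN.
rewrite -{1}(hsubmxK psi).
by apply/eqP/andP => [/eq_row_mx [-> ->] //| [/eqP -> /eqP ->]]; first by split.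
Qed.

Lemma dual_bound (C : seq 'M[F]_(k, m)) K (E : {set 'rV[F]_(k + m)}) :
  (1 < #|F|)%nat ->
  (forall (z : 'rV[F]_m) (w : 'rV[F]_k), z != 0 -> (count (fun A => z *m A^T == w) C <= K)%nat) ->
  (expn #|F| m * \sum_(A <- C) Nphi A E <=
     size C * (#|E| * #|E|) + K * expn #|F| (k + m) * #|E|)%nat.
Proof.
move=> q1 HK.
set q := #|F|; set S := size C; set e := #|E|.
pose M (psi : 'rV[F]_(k + m)) := (\sum_(x in E) \sum_(y in E) (dot psi x == dot psi y))%nat.
pose T psi := (q * M psi)%nat.
pose cnt (psi : 'rV[F]_(k + m)) :=
  (\sum_(A <- C) \sum_(eta : 'rV[F]_m) (eta *m (MA A)^T == psi))%nat.
have Ha : forall A, (q * \sum_(eta : 'rV[F]_m) M (eta *m (MA A)^T) =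
     e * e * expn q m + expn q m * (q - 1) * Nphi A E)%nat.
  move=> A; rewrite -L2; congr (_ * _)%nat; apply: eq_bigr => eta _.
  by apply: eq_bigr => x _; apply: eq_bigr => y _; rewrite !dot_mulmx.
have Hb : (\sum_(A <- C) q * \sum_(eta : 'rV[F]_m) M (eta *m (MA A)^T) =
     \sum_(psi : 'rV[F]_(k + m)) T psi * cnt psi)%nat.
  rewrite (eq_bigr (fun A => \sum_(eta : 'rV[F]_m) \sum_(psi : 'rV[F]_(k + m))
        ((eta *m (MA A)^T == psi) * T psi))%nat); last first.
    move=> A _; rewrite big_distrr /=; apply: eq_bigr => eta _.
    by rewrite sum_delta.
  rewrite (eq_bigr (fun A => \sum_(psi : 'rV[F]_(k + m)) \sum_(eta : 'rV[F]_m)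
        ((eta *m (MA A)^T == psi) * T psi))%nat); last by move=> A _; rewrite exchange_big.
  rewrite exchange_big /=; apply: eq_bigr => psi _.
  rewrite /cnt mulnC big_distrl /=; apply: eq_bigr => A _.
  by rewrite big_distrl.
have Hc : forall psi, (e * e <= T psi)%nat.
  move=> psi; have := @cs_fibers _ _ (dot psi) E.
  move/leq_trans; apply.
  by rewrite /T /M leq_mul2r max_card orbT.
have Hd : (\sum_(psi : 'rV[F]_(k + m)) T psi =
     e * e * expn q (k + m) + expn q (k + m) * (q - 1) * e)%nat.
  have e1 : (\sum_(eta : 'rV[F]_(k + m)) \sum_(x in E) \sum_(y in E)
      (dot eta (x *m (1%:M : 'M[F]_(k + m))) == dot eta (y *m (1%:M : 'M[F]_(k + m)))) =
      \sum_(psi : 'rV[F]_(k + m)) M psi)%nat.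
    by apply: eq_bigr => psi _; apply: eq_bigr => x _; apply: eq_bigr => y _; rewrite !mulmx1.
  have e2 : (\sum_(x in E) \sum_(y in E)
      (x *m (1%:M : 'M[F]_(k + m)) == y *m (1%:M : 'M[F]_(k + m))) = e)%nat.
    rewrite /e -sum_diag; apply: eq_bigr => x _; apply: eq_bigr => y _; by rewrite !mulmx1.
  by rewrite /T -big_distrr /= -e1 L2 e2.
have He : forall psi, (cnt psi <= (if psi == zr then S else K))%nat.
  move=> psi.
  rewrite /cnt (eq_bigr (fun A => (- (rsubmx psi *m A^T) == lsubmx psi) : nat)); last first.
    move=> A _.
    rewrite (eq_bigr (fun eta => ((rsubmx psi == eta) * (- (rsubmx psi *m A^T) == lsubmx psi))%nat)) ?sum_delta //.
    move=> eta _; rewrite MA_tr eq_sym.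
    by case: (eqVneq (rsubmx psi) eta) => [<-|] //=; rewrite mul1n.
  rewrite (sum_count C (fun A => - (rsubmx psi *m A^T) == lsubmx psi)).
  case: (eqVneq psi 0) => [_|nz]; first exact: count_size.
  case: (eqVneq (rsubmx psi) 0) => [r0|rnz].
    rewrite (eq_count (a2 := pred0)) ?count_pred0 // => A /=.
    rewrite r0 mul0mx oppr0; apply/negbTE; apply: contra nz => /eqP l0.
    by rewrite -(hsubmxK psi) -l0 r0 row_mx0.
  apply: leq_trans (HK _ (- lsubmx psi) rnz).
  by rewrite (eq_count (a2 := fun A => rsubmx psi *m A^T == - lsubmx psi)) // => A /=; rewrite eqr_oppLR.
have Hsum : (\sum_(psi : 'rV[F]_(k + m)) cnt psi = S * expn q m)%nat.
  rewrite /cnt exchange_big /=.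
  rewrite (eq_bigr (fun A => \sum_(eta : 'rV[F]_m) 1)%nat); last first.
    move=> A _; rewrite exchange_big /=; apply: eq_bigr => eta _.
    by have := sum_delta (eta *m (MA A)^T) (fun _ => 1%nat); rewrite (eq_bigr (fun x => (eta *m (MA A)^T == x) : nat)) // => x _; rewrite muln1.
  rewrite sum_const_seq; congr (_ * _)%nat.
  by rewrite sum1_card cardT -cardE card_mx mul1n.
have HT0 : T zr = (q * (e * e))%nat.
  rewrite /T /M; congr (_ * _)%nat.
  rewrite /e -sum_nat_const; apply: eq_bigr => x _.
  rewrite -sum1_card; apply: eq_bigr => y _.
  by rewrite !dot0l eqxx.
pose c' (psi : 'rV[F]_(k + m)) := if psi == zr then S else K.
have Hf1 : (\sum_(psi : 'rV[F]_(k + m)) T psi * cnt psi <=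
    e * e * \sum_(psi : 'rV[F]_(k + m)) cnt psi +
    \sum_(psi : 'rV[F]_(k + m)) (T psi - e * e) * c' psi)%nat.
  rewrite big_distrr /= -big_split /=; apply: leq_sum => psi _.
  rewrite -{1}(subnKC (Hc psi)) mulnDl leq_add2l leq_mul2l.
  by rewrite He orbT.
have Hf2 : (\sum_(psi : 'rV[F]_(k + m)) (T psi - e * e) * c' psi <=
    (T zr - e * e) * S + K * \sum_(psi : 'rV[F]_(k + m)) (T psi - e * e))%nat.
  rewrite (bigD1 0) //= /c' eqxx leq_add2l.
  rewrite big_distrr /=; apply: leq_trans (_ : \sum_(psi | psi != zr) K * (T psi - e * e) <= _)%nat.
    by apply: leq_sum => psi /negbTE ->; rewrite mulnC.
  by rewrite [X in (_ <= X)%nat](bigD1 0) //= leq_addl.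
have Hf3 : (\sum_(psi : 'rV[F]_(k + m)) (T psi - e * e) = expn q (k + m) * (q - 1) * e)%nat.
  rewrite sumnB; last by move=> psi _; apply: Hc.
  rewrite Hd sum_nat_const cardT -cardE card_mx mul1n.
  by rewrite [(e * e * _)%nat]mulnC addKn.
have Hlhs : (\sum_(A <- C) q * \sum_(eta : 'rV[F]_m) M (eta *m (MA A)^T) =
    S * (e * e * expn q m) + expn q m * (q - 1) * \sum_(A <- C) Nphi A E)%nat.
  rewrite (eq_bigr _ (fun A _ => Ha A)) big_split /= sum_const_seq big_distrr //.
have key : (expn q m * (q - 1) * \sum_(A <- C) Nphi A E <=
    (q - 1) * (S * (e * e) + K * expn q (k + m) * e))%nat.
  have := leq_trans (leq_trans (eq_leq Hb) Hf1) (leq_add (leqnn _) Hf2).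
  rewrite Hlhs Hsum Hf3 HT0.
  set X := (\sum_(A <- C) Nphi A E)%nat.
  set Q := expn q m; set D := expn q (k + m).
  have -> : (q * (e * e) - e * e = (q - 1) * (e * e))%nat by rewrite mulnBl mul1n.
  move=> h; rewrite -(leq_add2l (S * (e * e * Q))).
  apply: leq_trans h _.
  rewrite mulnDr; nia.
rewrite -(@leq_pmul2l (q - 1)); last by rewrite subn_gt0.
by rewrite mulnA [((q - 1) * _)%nat]mulnC.
Qed.

End Dual2.

Section Wsec.
Local Open Scope ring_scope.
Variable F : finFieldType.
Variables k m : nat.

Definition phiL (A : 'M[F]_(k, m)) : 'Hom('rV[F]_(k + m), 'rV[F]_m) := linfun (mulmxr (MA A)).
Definition Wof (A : 'M[F]_(k, m)) : {vspace 'rV[F]_(k + m)} := lker (phiL A).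

Lemma memWof A v : (v \in Wof A) = (v *m MA A == 0).
Proof. by rewrite memv_ker lfunE. Qed.

Lemma dimWof A : \dim (Wof A) = k.
Proof.
have := limg_ker_dim (phiL A) fullv.
have -> : (phiL A @: fullv)%VS = fullv.
  apply/vspaceP => w; rewrite memvf.
  have -> : w = phiL A (row_mx 0 w).
    by rewrite lfunE /= mul_MA row_mxKl row_mxKr mul0mx subr0.
  by apply: memv_img; rewrite memvf.
rewrite capfv !dimvf !dim_matrix /Wof => h.
apply/eqP; rewrite -(eqn_add2r m); apply/eqP.
by move: h; rewrite !mul1r.
Qed.

Lemma Wof_inj : injective Wof.
Proof.
move=> A B eAB; apply/row_matrixP => i.
have : row_mx (delta_mx 0 i) (row i A) \in Wof A.
  by rewrite memWof mul_MA row_mxKl row_mxKr -rowE subrr.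
rewrite eAB memWof mul_MA row_mxKl row_mxKr -rowE subr_eq0.
by move/eqP.
Qed.

End Wsec.

Section Fp.
Local Open Scope ring_scope.
Variable p : nat.
Hypothesis pp : prime p.
Variables k' m' : nat.
Local Notation k := k'.+1.
Local Notation m := m'.+1.

Lemma coset_MA (A : 'M['F_p]_(k, m)) (x y : 'rV['F_p]_(k + m)) :
  coset_of (Wof A) x = coset_of (Wof A) y -> x *m MA A = y *m MA A.
Proof.
move=> exy.
have : x \in coset_of (Wof A) x by rewrite /coset_of inE subrr mem0v.
rewrite exy /coset_of inE memWof mulmxBl subr_eq0 => /eqP //.
Qed.

Lemma proj_cs (A : 'M['F_p]_(k, m)) (E : {set 'rV['F_p]_(k + m)}) :
  (#|E| * #|E| <= #|proj_cosets (Wof A) E| * Nphi A E)%nat.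
Proof.
apply: leq_trans (@cs_fibers _ _ (coset_of (Wof A)) E) _.
rewrite leq_mul2l; apply/orP; right.
apply: leq_sum => x _; apply: leq_sum => y _.
by case: eqP => // /coset_MA ->; rewrite eqxx.
Qed.

Definition cst := (expn k m + expn m k)%nat.

Lemma fam_direct N : (0 < N)%nat -> (N <= expn p (k' * m))%nat ->
  exists C : seq 'M['F_p]_(k, m), [/\ uniq C, size C = (expn p m * N)%nat &
    forall E, (expn p m * \sum_(A <- C) Nphi A E <= cst * size C * (#|E| * #|E| + #|E| * expn p m))%nat].
Proof.
move=> N0 NB.
have cF : #|'F_p| = p by rewrite card_Fp.
have NB' : (N <= expn #|'F_p| (k' * m))%nat by rewrite cF.
have [D [uD sD cD]] := @construct 'F_p k' m N N0 NB'.
rewrite cF in sD.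
exists D; split => // E.
have := @direct_bound _ k m D (expn k m * N) E.
move=> H; have {H} H := H (fun x y nz => cD x y nz).
apply: leq_trans (_ : (expn p m * (#|E| * size D + #|E| * #|E| * (expn k m * N)) <= _)%nat).
  by rewrite leq_mul2l H orbT.
rewrite mulnDr /cst.
have -> : (expn p m * (#|E| * #|E| * (expn k m * N)) = expn k m * size D * (#|E| * #|E|))%nat.
  by rewrite sD; lia.
have : (expn p m * (#|E| * size D) <= size D * (#|E| * expn p m))%nat by rewrite eq_leq //; lia.
have : (1 <= expn m k)%nat by rewrite expn_gt0.
have : (1 <= expn k m)%nat by rewrite expn_gt0.
set a := expn k m; set b := expn m k; set s := size D; set e := #|E|; set P := expn p m.
move=> h1 h2 h3; nia.
Qed.

Lemma fam_dual N : (0 < N)%nat -> (N <= expn p (m' * k))%nat ->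
  exists C : seq 'M['F_p]_(k, m), [/\ uniq C, size C = (expn p k * N)%nat &
    forall E, (expn p m * \sum_(A <- C) Nphi A E <= cst * size C * (#|E| * #|E| + #|E| * expn p m))%nat].
Proof.
move=> N0 NB.
have cF : #|'F_p| = p by rewrite card_Fp.
have NB' : (N <= expn #|'F_p| (m' * k))%nat by rewrite cF.
have [D [uD sD cD]] := @construct 'F_p m' k N N0 NB'.
exists (map trmx D); split.
- by rewrite map_inj_uniq //; apply: trmx_inj.
- by rewrite size_map sD cF.
move=> E.
have HK : forall (z : 'rV['F_p]_m) (w : 'rV['F_p]_k), z != 0 ->
    (count (fun A => z *m A^T == w) (map trmx D) <= expn m k * N)%nat.
  move=> z w nz; rewrite count_map; apply: leq_trans (cD z w nz); rewrite eq_leq //.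
  by apply: eq_count => M /=; rewrite trmxK.
have := @dual_bound _ k m (map trmx D) (expn m k * N) E (prime_gt1 _) HK.
rewrite cF size_map => H; have {H} H := H pp.
apply: leq_trans H _.
rewrite cF in sD; rewrite sD /cst expnD.
have : (1 <= expn k m)%nat by rewrite expn_gt0.
set a := expn k m; set b := expn m k; set e := #|E|; set P := expn p m; set Q := expn p k.
move=> h1; nia.
Qed.


End Fp.

Section Real.
Local Open Scope R_scope.
Lemma floor_ex (x : R) : 1 <= x -> exists N : nat, (0 < N)%nat /\ INR N <= x < INR N + 1.
Proof.
move=> x1.
have [h1 h2] := archimed x.
have hz : (1 <= up x - 1)%Z.
  have : (1 < up x)%Z by apply: lt_IZR; lra.
  lia.
have [N hN] : exists N, (up x - 1)%Z = Z.of_nat N by apply: IZN; lia.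
exists N; rewrite INR_IZR_INZ -hN minus_IZR; split; last lra.
have : (1 <= Z.of_nat N)%Z by lia.
by move=> h; apply/ltP; lia.
Qed.

Lemma INR_expn p n : INR (expn p n) = INR p ^ n.
Proof. by elim: n => [|n IH] //; rewrite expnS mult_INR IH. Qed.

Lemma INR_addn a b : INR (a + b)%nat = INR a + INR b.
Proof. by rewrite -plusE plus_INR. Qed.

Lemma INR_muln a b : INR (a * b)%nat = INR a * INR b.
Proof. by rewrite -multE mult_INR. Qed.

Lemma count_bound p k' m' (C : seq 'M['F_p]_(k'.+1, m'.+1)) E lam : 0 <= lam ->
  INR (count (fun A => Rleb (INR #|proj_cosets (Wof A) E|) lam) C) * INR (#|E| * #|E|)
    <= lam * INR (\sum_(A <- C) Nphi A E).
Proof.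
move=> l0; elim: C => [|A s IH].
  rewrite big_nil. change (INR 0 * INR (#|E| * #|E|) <= lam * INR 0). rewrite /INR. lra.
rewrite big_cons.
set P := (fun A0 : 'M['F_p]_(k'.+1, m'.+1) => Rleb (INR #|proj_cosets (Wof A0) E|) lam).
have -> : count P (A :: s) = (P A + count P s)%nat by [].
rewrite !INR_addn.
have HN := pos_INR (Nphi A E).
have Hcs := proj_cs A E.
move/leP: Hcs => Hcs; apply le_INR in Hcs; rewrite !INR_muln in Hcs.
rewrite INR_muln in IH *.
case hP: (P A).
  have h : INR #|proj_cosets (Wof A) E| <= lam.
    by move: hP; rewrite /P /Rleb; case: Rle_dec.
  have : INR #|proj_cosets (Wof A) E| * INR (Nphi A E) <= lam * INR (Nphi A E).
    by apply: Rmult_le_compat_r.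
  change (INR true) with 1.
  move: IH Hcs; rewrite -/P.
  set e := INR #|E|; set c := INR (count P s); set X := INR (\sum_(j <- s) Nphi j E).
  set pr := INR #|proj_cosets (Wof A) E|; set nA := INR (Nphi A E).
  move=> *; nra.
change (INR false) with 0.
move: IH Hcs; rewrite -/P.
set e := INR #|E|; set c := INR (count P s); set X := INR (\sum_(j <- s) Nphi j E).
move=> *; nra.
Qed.
Lemma Rpower_diff (p e t : R) : (1 < p)%R -> (0 < e)%R ->
  Rpower p (t - ln e / ln p) = (Rpower p t / e)%R.
Proof.
move=> p1 e0.
have lp : ln p <> 0 by apply: ln_neq_0; lra.
rewrite /Rpower.
have -> : ((t - ln e / ln p) * ln p = t * ln p + - ln e)%R by field.
by rewrite exp_plus exp_Ropp exp_ln.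
Qed.

Lemma choose_N p b ab (alpha : R) : prime p -> INR b <= alpha -> alpha <= INR b + INR ab ->
  exists N, [/\ (0 < N)%nat, (N <= expn p ab)%nat,
    INR (expn p b * N) <= Rpower (INR p) alpha &
    Rpower (INR p) alpha <= 2 * INR (expn p b * N)].
Proof.
move=> pp hb hab.
have p1 : 1 < INR p by apply: (lt_INR 1); apply/ltP; apply: prime_gt1.
set x := Rpower (INR p) (alpha - INR b).
have x1 : 1 <= x.
  rewrite /x -(Rpower_O (INR p)); last lra.
  apply: Rle_Rpower; lra.
have [N [N0 [hN1 hN2]]] := floor_ex x1.
have hx : Rpower (INR p) alpha = INR (expn p b) * x.
  rewrite /x INR_expn -Rpower_pow; last lra.
  by rewrite -Rpower_plus; congr Rpower; ring.
have Pb : 0 < INR (expn p b) by rewrite INR_expn; apply: pow_lt; lra.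
exists N; split => //.
- apply/leP; apply: INR_le.
  apply: Rle_trans hN1 _.
  rewrite INR_expn -Rpower_pow; last lra.
  apply: Rle_Rpower; lra.
- rewrite INR_muln hx; apply: Rmult_le_compat_l; lra.
- rewrite INR_muln hx.
  have : 1 <= INR N by apply: (le_INR 1); apply/leP.
  nra.
Qed.

End Real.

Lemma final_from_family p k' m' (alpha : R) (C : seq 'M['F_p]_(k'.+1, m'.+1)) :
  prime p -> uniq C ->
  (INR (size C) <= Rpower (INR p) alpha)%R -> (Rpower (INR p) alpha <= 2 * INR (size C))%R ->
  (forall E, (expn p m'.+1 * \sum_(A <- C) Nphi A E <=
      cst k' m' * size C * (#|E| * #|E| + #|E| * expn p m'.+1))%nat) ->
  exists G : seq {vspace 'rV['F_p]_(k'.+1 + m'.+1)},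
    uniq G /\
    (forall W, W \in G -> \dim W = (k'.+1 + m'.+1 - m'.+1)%N) /\
    (Rpower (INR p) alpha <= (2 * INR (cst k' m') + 2) * INR (size G))%R /\
    (INR (size G) <= (2 * INR (cst k' m') + 2) * Rpower (INR p) alpha)%R /\
    forall E : {set 'rV['F_p]_(k'.+1 + m'.+1)},
      ((0 < #|E|)%N -> (#|E| <= expn p m'.+1)%N ->
        let s := (ln (INR #|E|) / ln (INR p))%R in
        forall t : R, (0 < t)%R -> (t <= s)%R ->
          (INR (count (fun W => Rleb (INR #|proj_cosets W E|) (Rpower (INR p) t)) G)
             <= (2 * INR (cst k' m') + 2) * INR (size G) * Rpower (INR p) (t - s))%R) /\
      ((expn p m'.+1 < #|E|)%N ->
        forall eps : R, (0 < eps)%R -> (eps <= 1)%R ->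
          (INR (count (fun W => Rleb (INR #|proj_cosets W E|) (eps * INR (expn p m'.+1))) G)
             <= (2 * INR (cst k' m') + 2) * INR (size G) * eps)%R).
Proof.
move=> pp uC hS1 hS2 Hkey.
have p1 : (1 < INR p)%R by apply: (lt_INR 1); apply/ltP; apply: prime_gt1.
have c0 := pos_INR (cst k' m').
have pa0 : (0 < Rpower (INR p) alpha)%R by rewrite /Rpower; apply: exp_pos.
exists (map (@Wof _ k'.+1 m'.+1) C); split.
  by rewrite map_inj_uniq //; apply: Wof_inj.
split.
  move=> W /mapP [A _ ->]; rewrite dimWof; by rewrite addnK.
have -> : INR (size (map (@Wof _ k'.+1 m'.+1) C)) = INR (size C) by rewrite size_map.
have S00 := pos_INR (size C).
split; first by have := Rmult_le_pos _ _ c0 S00; lra.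
split; first by have := Rmult_le_pos _ _ c0 (Rlt_le _ _ pa0); lra.
move=> E.
set S := INR (size C); set c := INR (cst k' m').
set P := INR (expn p m'.+1).
have P0 : (0 < P)%R by rewrite /P INR_expn; apply: pow_lt; lra.
have HK := Hkey E.
move/leP: HK => HK; apply le_INR in HK.
rewrite !INR_muln INR_addn !INR_muln -/P -/S -/c in HK.
set e := INR #|E| in HK *.
set X := INR (\sum_(A <- C) Nphi A E) in HK *.
have X0 : (0 <= X)%R by apply: pos_INR.
have S0 : (0 <= S)%R by apply: pos_INR.
split.
- move=> E0 EP s t t0 ts.
  have e1 : (1 <= e)%R by rewrite /e; apply: (le_INR 1); apply/leP.
  have eP : (e <= P)%R by rewrite /e /P; apply: le_INR; apply/leP.
  rewrite /s Rpower_diff //; last by lra.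
  rewrite count_map.
  set lam := Rpower (INR p) t.
  have l0 : (0 < lam)%R by rewrite /lam /Rpower; apply: exp_pos.
  have := count_bound C E (Rlt_le _ _ l0).
  rewrite INR_muln -/e -/X.
  set cnt := INR (count _ C).
  move=> hc.
  have c1 : (0 <= cnt)%R by apply: pos_INR.
  have h1 : (cnt * (e * e) * P <= lam * (P * X))%R by nra.
  have h2 : (lam * (P * X) <= lam * (c * S * (e * e + e * P)))%R by apply: Rmult_le_compat_l; lra.
  have h3 : (c * S * (e * e + e * P) <= c * S * (2 * e * P))%R.
    apply: Rmult_le_compat_l; first by apply: Rmult_le_pos.
    nra.
  have h4 : (cnt * e <= 2 * lam * c * S)%R.
    have ep : (0 < e * P)%R by nra.
    apply: (Rmult_le_reg_r (e * P)) => //; nra.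
  have -> : ((2 * c + 2) * S * (lam / e) = ((2 * c + 2) * S * lam) / e)%R by field; lra.
  apply: (Rmult_le_reg_r e); first lra.
  rewrite /Rdiv Rmult_assoc Rinv_l; last lra.
  nra.
- move=> EP eps e0 e1.
  have eP : (P < e)%R by rewrite /e /P; apply: lt_INR; apply/ltP.
  rewrite count_map.
  have := count_bound C E (Rlt_le _ _ (Rmult_lt_0_compat _ _ e0 P0)).
  rewrite INR_muln -/e -/X -/P.
  set cnt := INR (count _ C).
  move=> hc.
  have c1 : (0 <= cnt)%R by apply: pos_INR.
  have ee : (0 < e * e)%R by nra.
  have h2 : (eps * P * X <= eps * (c * S * (e * e + e * P)))%R.
    rewrite Rmult_assoc; apply: Rmult_le_compat_l; lra.
  have h3 : (c * S * (e * e + e * P) <= c * S * (2 * (e * e)))%R.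
    apply: Rmult_le_compat_l; first by apply: Rmult_le_pos.
    nra.
  have S0' : (0 <= S)%R by apply: pos_INR.
  have h5 : (0 <= S * eps * (e * e))%R.
    apply: Rmult_le_pos; last lra.
    apply: Rmult_le_pos; lra.
  have h6 : (eps * (c * S * (2 * (e * e))) <= (2 * c + 2) * S * eps * (e * e))%R by lra.
  have h7 : (eps * (c * S * (e * e + e * P)) <= eps * (c * S * (2 * (e * e))))%R.
    by apply: Rmult_le_compat_l; lra.
  apply: (Rmult_le_reg_r (e * e)) => //; lra.
Qed.

Unset Implicit Arguments. Set Strict Implicit.

Theorem corollary1p4 (n m : nat) (alpha : R) :
  (2 <= n)%N -> (1 <= m)%N -> (m <= n - 1)%N ->
  (INR (minn m (n - m)) < alpha)%R -> (alpha <= INR (m * (n - m)))%R ->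
  exists C eps0 : R, (0 < C)%R /\ (0 < eps0)%R /\
  forall p : nat, prime p ->
  exists G : seq {vspace 'rV['F_p]_n},
    uniq G /\
    (forall W, W \in G -> \dim W = (n - m)%N) /\
    (Rpower (INR p) alpha <= C * INR (size G))%R /\
    (INR (size G) <= C * Rpower (INR p) alpha)%R /\
    forall E : {set 'rV['F_p]_n},
      ((0 < #|E|)%N -> (#|E| <= expn p m)%N ->
        let s := (ln (INR #|E|) / ln (INR p))%R in
        forall t : R, (0 < t)%R -> (t <= s)%R ->
          (INR (count (fun W => Rleb (INR #|proj_cosets W E|) (Rpower (INR p) t)) G)
             <= C * INR (size G) * Rpower (INR p) (t - s))%R) /\
      ((expn p m < #|E|)%N ->
        forall eps : R, (0 < eps)%R -> (eps <= eps0)%R ->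
          (INR (count (fun W => Rleb (INR #|proj_cosets W E|) (eps * INR (expn p m))) G)
             <= C * INR (size G) * eps)%R).
Proof.
move=> H2n H1m Hmn Hmin Hmax.
have [m' em] : exists m', m = m'.+1 by exists m.-1; rewrite prednK.
have [k' ek] : exists k', n = (k'.+1 + m)%nat.
  by exists (n - m).-1; rewrite prednK; [rewrite subnK // (leq_trans Hmn) // leq_subr | rewrite subn_gt0; lia].
subst m n.
rewrite addnK in Hmin Hmax.
exists (2 * INR (cst k' m') + 2)%R, 1%R.
split; first by have := pos_INR (cst k' m'); lra.
split; first lra.
move=> p pp.
case: (Rle_lt_dec (INR m'.+1) alpha) => ha.
- have hab : (alpha <= INR m'.+1 + INR (k' * m'.+1))%R.
    by rewrite -INR_addn; apply: Rle_trans Hmax _; apply: le_INR; apply/leP; rewrite mulnC mulSn.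
  have [N [N0 NB hS1 hS2]] := choose_N pp ha hab.
  have [C [uC sC HC]] := fam_direct pp N0 NB.
  by refine (final_from_family pp uC _ _ HC); rewrite sC.
- have hk : (INR k'.+1 < alpha)%R.
    move: Hmin; case: (leqP m'.+1 k'.+1) => hmk.
      by move=> h; lra.
    by [].
  have hab : (alpha <= INR k'.+1 + INR (m' * k'.+1))%R.
    by rewrite -INR_addn; apply: Rle_trans Hmax _; apply: le_INR; apply/leP; rewrite mulSn.
  have [N [N0 NB hS1 hS2]] := choose_N pp (Rlt_le _ _ hk) hab.
  have [C [uC sC HC]] := fam_dual pp N0 NB.
  by refine (final_from_family pp uC _ _ HC); rewrite sC.
Qed.
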